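(* Let $X_1,\dots,X_n$ be independent Rademacher random variables, $d\le n$, and $f:\{-1,+1\}^n\to\mathbb{R}$ of the form $f(x)=\sum_{S\subseteq[n],|S|\le d}\hat f_Sx_S$. Then for every $t>0$, \[ \mathbb{P}\big(|f(X)-\mathbb{E}f(X)|\ge t\big)\le\exp\Big(1-\min_{j=1,\dots,d}\Big(\frac{t}{de\,\mathrm{W}_j(f)^{1/2}}\Big)^{2/j}\Big). \] Equivalently, with probability at least $1-\exp(1-t)$, $|f(X)-\mathbb{E}f(X)|\le de\max_{j=1,\dots,d}(\mathrm{W}_j(f)t^j)^{1/2}$.
   Context: $\mathbb{P}(X_i=1)=\mathbb{P}(X_i=-1)=1/2$. For $S\subseteq[n]$, $x_S=\prod_{i\in S}x_i$; $\hat f_S=\mathbb{E}[X_Sf(X)]$ are the Fourier–Walsh coefficients, and $\mathrm{W}_j(f)=\sum_{|S|=j}\hat f_S^2$ is the Fourier weight of order $j$ (terms with $\mathrm{W}_j(f)=0$ are interpreted as $+\infty$ in the minimum). *)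

(* Defs.v *)
From Stdlib Require Import Reals List.
Import ListNotations.
Open Scope R_scope.

(* Points of {-1,+1}^n are encoded as boolean lists of length n:
   true ↦ +1, false ↦ -1.  Subsets S ⊆ [n] are encoded by their
   indicator boolean lists of length n. *)
Fixpoint cube (n : nat) : list (list bool) :=
  match n with
  | O => [[]]
  | S m => map (cons true) (cube m) ++ map (cons false) (cube m)
  end.

Definition pm (b : bool) : R := if b then 1 else -1.

Fixpoint chi (S x : list bool) : R :=
  match S, x with
  | s :: S', b :: x' => (if s then pm b else 1) * chi S' x'
  | _, _ => 1
  end.

Definition card (S : list bool) : nat := length (filter (fun b => b) S).

Definition sumR {A} (l : list A) (g : A -> R) : R :=
  fold_right Rplus 0 (map g l).

Definition Expect (n : nat) (g : list bool -> R) : R :=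
  sumR (cube n) g / 2 ^ n.

Definition Prob (n : nat) (P : list bool -> Prop)
  (Pdec : forall x, {P x} + {~ P x}) : R :=
  sumR (cube n) (fun x => if Pdec x then 1 else 0) / 2 ^ n.

Definition fhat (n : nat) (f : list bool -> R) (S : list bool) : R :=
  Expect n (fun x => chi S x * f x).

Definition W (n : nat) (f : list bool -> R) (j : nat) : R :=
  sumR (filter (fun S => Nat.eqb (card S) j) (cube n))
       (fun S => fhat n f S ^ 2).

(* The j-th term of the minimum, None standing for +infinity (W_j = 0). *)
Definition term (n d : nat) (f : list bool -> R) (t : R) (j : nat) : option R :=
  if Req_EM_T (W n f j) 0 then None
  else Some (Rpower (t / (INR d * exp 1 * sqrt (W n f j))) (2 / INR j)).

Definition omin (a b : option R) : option R :=
  match a, b with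
  | None, _ => b
  | _, None => a
  | Some x, Some y => Some (Rmin x y)
  end.

Definition minterm (n d : nat) (f : list bool -> R) (t : R) : option R :=
  fold_right omin None (map (term n d f t) (seq 1 d)).

Definition tail_bound (m : option R) : R :=
  match m with
  | None => 0
  | Some m => exp (1 - m)
  end.

Definition dev_event (n : nat) (f : list bool -> R) (t : R) (x : list bool) : Prop :=
  t <= Rabs (f x - Expect n f).

Definition dev_event_dec (n : nat) (f : list bool -> R) (t : R) :
  forall x, {dev_event n f t x} + {~ dev_event n f t x} :=
  fun x => Rle_dec t (Rabs (f x - Expect n f)).

(* Main.v *)
Require Import Defs.
From Stdlib Require Import Reals List Lra Lia ZArith.
Import ListNotations.
Open Scope R_scope.

Lemma sumR_app {A} (l1 l2 : list A) g : sumR (l1 ++ l2) g = sumR l1 g + sumR l2 g.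
Proof. induction l1; simpl; unfold sumR in *; simpl; [lra|]. rewrite IHl1; ring. Qed.
Lemma sumR_map {A B} (l : list A) (h : A -> B) g : sumR (map h l) g = sumR l (fun x => g (h x)).
Proof. unfold sumR; rewrite map_map; reflexivity. Qed.
Lemma sumR_nil {A} g : sumR (@nil A) g = 0. Proof. reflexivity. Qed.
Lemma sumR_cons {A} (a : A) l g : sumR (a :: l) g = g a + sumR l g. Proof. reflexivity. Qed.
Lemma sumR_ext_in {A} (l : list A) g h : (forall x, In x l -> g x = h x) -> sumR l g = sumR l h.
Proof. induction l; intros H; [reflexivity|]. rewrite !sumR_cons, H, IHl; auto; [intros; apply H|]; simpl; auto. Qed.
Lemma sumR_plus {A} (l : list A) g h : sumR l (fun x => g x + h x) = sumR l g + sumR l h.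
Proof. induction l; [rewrite !sumR_nil; ring|]. rewrite !sumR_cons, IHl; ring. Qed.
Lemma sumR_scal {A} (l : list A) c g : sumR l (fun x => c * g x) = c * sumR l g.
Proof. induction l; [rewrite !sumR_nil; ring|]. rewrite !sumR_cons, IHl; ring. Qed.
Lemma sumR_le_in {A} (l : list A) g h : (forall x, In x l -> g x <= h x) -> sumR l g <= sumR l h.
Proof. induction l; intros H; [rewrite !sumR_nil; lra|]. rewrite !sumR_cons.
  apply Rplus_le_compat; [apply H; simpl; auto| apply IHl; intros; apply H; simpl; auto]. Qed.
Lemma sumR_nonneg {A} (l : list A) g : (forall x, In x l -> 0 <= g x) -> 0 <= sumR l g.
Proof. intros H. replace 0 with (sumR l (fun _ => 0)). apply sumR_le_in; auto.
  induction l; [reflexivity|]. rewrite sumR_cons, IHl; [ring|]. intros; apply H; simpl; auto. Qed.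
Lemma sumR_zero_in {A} (l : list A) g : (forall x, In x l -> 0 <= g x) -> sumR l g <= 0 ->
  forall x, In x l -> g x = 0.
Proof. induction l; intros H Hs x Hx; [destruct Hx|]. rewrite sumR_cons in Hs.
  assert (0 <= g a) by (apply H; simpl; auto).
  assert (0 <= sumR l g) by (apply sumR_nonneg; intros; apply H; simpl; auto).
  destruct Hx as [<-|Hx]; [lra|]. apply IHl; auto; [intros; apply H; simpl; auto| lra]. Qed.

Lemma sumR_cube_S n g : sumR (cube (S n)) g =
  sumR (cube n) (fun x => g (true :: x)) + sumR (cube n) (fun x => g (false :: x)).
Proof. simpl. rewrite sumR_app, !sumR_map. reflexivity. Qed.

Lemma in_cube_S n x : In x (cube (S n)) -> exists b x', x = b :: x' /\ In x' (cube n).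
Proof. simpl; intros H. apply in_app_or in H. destruct H as [H|H]; apply in_map_iff in H;
  destruct H as [x' [<- H]]; eauto. Qed.

Definition F n (c : list bool -> R) x := sumR (cube n) (fun T => c T * chi T x).

Lemma F_cons n c b x : F (S n) c (b :: x) =
  pm b * F n (fun T => c (true :: T)) x + F n (fun T => c (false :: T)) x.
Proof. unfold F. rewrite sumR_cube_S. simpl chi. rewrite <- sumR_scal.
  f_equal; apply sumR_ext_in; intros; ring. Qed.

Lemma F_0 c : F 0 c [] = c [].
Proof. unfold F; simpl. unfold sumR; simpl; ring. Qed.

Lemma orth n c S : In S (cube n) -> sumR (cube n) (fun x => chi S x * F n c x) = 2 ^ n * c S.
Proof. revert c S; induction n; intros c S HS.
- simpl in HS; destruct HS as [<-|[]]. unfold sumR; simpl. rewrite F_0. ring.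
- destruct (in_cube_S _ _ HS) as [s [S' [-> HS']]]. rewrite sumR_cube_S.
  rewrite <- sumR_plus. destruct s.
  + transitivity (sumR (cube n) (fun x => 2 * (chi S' x * F n (fun T => c (true :: T)) x))).
    { apply sumR_ext_in; intros. rewrite !F_cons. simpl. ring. }
    rewrite sumR_scal, IHn; auto. simpl; ring.
  + transitivity (sumR (cube n) (fun x => 2 * (chi S' x * F n (fun T => c (false :: T)) x))).
    { apply sumR_ext_in; intros. rewrite !F_cons. simpl. ring. }
    rewrite sumR_scal, IHn; auto. simpl; ring.
Qed.

Lemma C_nonneg n p : 0 <= C n p.
Proof. unfold C. unfold Rdiv. apply Rmult_le_pos; [apply pos_INR|].
  apply Rlt_le, Rinv_0_lt_compat, Rmult_lt_0_compat; apply INR_fact_lt_0. Qed.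

Lemma coef k l : (l <= k)%nat -> C (2*k) (2*l) <= C k l * (2 * INR k - 1) ^ l.
Proof. induction l; intros Hl.
- assert (E : forall m, C m 0 = 1).
  { intros m. unfold C. rewrite Nat.sub_0_r. simpl (Factorial.fact 0). simpl (INR 1).
    field. apply Rgt_not_eq, INR_fact_lt_0. }
  replace (2*0)%nat with 0%nat by lia. rewrite !E. simpl. lra.
- assert (H1 := IHl ltac:(lia)).
  replace (2 * S l)%nat with (S (S (2*l))) by lia.
  rewrite pascal_step3 by lia. rewrite pascal_step3 by lia. rewrite (pascal_step3 k l) by lia.
  rewrite !minus_INR by lia. rewrite !S_INR, !mult_INR. simpl (INR 2).
  assert (Ha : 0 <= INR l) by apply pos_INR.
  assert (Hb : INR l + 1 <= INR k) by (rewrite <- S_INR; apply le_INR; lia).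
  set (a := INR l) in *. set (b := INR k) in *.
  assert (HC2 := C_nonneg (2*k) (2*l)). assert (HC1 := C_nonneg k l).
  set (p := (b - a) / (a + 1)).
  set (s := (2*b - (2*a+1)) / (2*a+1)).
  assert (Hp : 0 <= p) by (unfold p; apply Rmult_le_pos; [lra| apply Rlt_le, Rinv_0_lt_compat; lra]).
  assert (Hs : s <= 2*b - 1).
  { unfold s. apply (Rmult_le_reg_r (2*a+1)); [lra|]. unfold Rdiv. rewrite Rmult_assoc, Rinv_l by lra. nra. }
  assert (Hs0 : 0 <= s) by (unfold s; apply Rmult_le_pos; [lra| apply Rlt_le, Rinv_0_lt_compat; lra]).
  transitivity (s * p * C (2*k) (2*l)).
  { right. unfold s, p. field. lra. }
  rewrite <- tech_pow_Rmult.
  replace (p * C k l * ((2 * b - 1) * (2 * b - 1) ^ l)) with ((2*b-1) * p * (C k l * (2*b-1)^l)) by ring.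
  apply Rmult_le_compat; [apply Rmult_le_pos; lra| lra | | lra].
  apply Rmult_le_compat_r; lra.
Qed.

Lemma sum_even_odd (g : nat -> R) k : sum_f_R0 g (2 * S k) =
  sum_f_R0 (fun l => g (2*l)%nat) (S k) + sum_f_R0 (fun l => g (2*l+1)%nat) k.
Proof. induction k.
- simpl. ring.
- replace (2 * S (S k))%nat with (S (S (2 * S k))) by lia.
  change (sum_f_R0 g (S (S (2*S k)))) with (sum_f_R0 g (2*S k) + g (S (2*S k)) + g (S (S (2 * S k)))).
  rewrite IHk.
  change (sum_f_R0 (fun l => g (2*l)%nat) (S (S k))) with
    (sum_f_R0 (fun l => g (2*l)%nat) (S k) + g (2 * S (S k))%nat).
  change (sum_f_R0 (fun l => g (2*l+1)%nat) (S k)) with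
    (sum_f_R0 (fun l => g (2*l+1)%nat) k + g (2 * S k + 1)%nat).
  replace (S (S (2 * S k))) with (2 * S (S k))%nat by lia.
  replace (S (2 * S k)) with (2*S k + 1)%nat by lia. ring.
Qed.

Lemma sum_zero g N : (forall i, g i = 0) -> sum_f_R0 g N = 0.
Proof. intros H; induction N; simpl; rewrite H; [|rewrite IHN]; ring. Qed.
Lemma pow_odd x l : (-x)^(2*l+1) = - x^(2*l+1).
Proof. rewrite !pow_add, !pow_mult. replace ((-x)^2) with (x^2) by ring. ring. Qed.

Lemma two_point k A B : (A + B) ^ (2*k) + (A - B) ^ (2*k) <= 2 * (A^2 + (2 * INR k - 1) * B^2) ^ k.
Proof. destruct k as [|k'].
- simpl. lra.
- rewrite (Rplus_comm A B). replace (A - B) with (-B + A) by ring.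
  rewrite (binomial B A), (binomial (-B) A). rewrite <- plus_sum. rewrite sum_even_odd. set (k := S k').
  rewrite (Rplus_comm (A^2)). rewrite binomial.
  replace (sum_f_R0 (fun l => (fun i : nat => C (2 * k) i * B ^ i * A ^ (2 * k - i) +
      C (2 * k) i * (- B) ^ i * A ^ (2 * k - i)) (2 * l + 1)%nat) k') with 0.
  2:{ symmetry. apply sum_zero. intros i. rewrite pow_odd. ring. }
  rewrite Rplus_0_r, scal_sum. apply sum_Rle. intros l Hl. cbv beta.
  replace (2*k - 2*l)%nat with (2*(k-l))%nat by lia.
  rewrite !pow_mult. replace ((-B)^2) with (B^2) by ring.
  rewrite Rpow_mult_distr.
  assert (H := coef k l Hl).
  assert (0 <= (B^2)^l) by (apply pow_le; nra). assert (0 <= (A^2)^(k-l)) by (apply pow_le; nra).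
  replace (C (2 * k) (2 * l) * (B ^ 2) ^ l * (A ^ 2) ^ (k - l) + C (2 * k) (2 * l) * (B ^ 2) ^ l * (A ^ 2) ^ (k - l))
    with (2 * (C (2 * k) (2 * l) * ((B ^ 2) ^ l * (A ^ 2) ^ (k - l)))) by ring.
  replace (C k l * ((2 * INR k - 1) ^ l * (B ^ 2) ^ l) * (A ^ 2) ^ (k - l) * 2)
    with (2 * ((C k l * (2 * INR k - 1) ^ l) * ((B ^ 2) ^ l * (A ^ 2) ^ (k - l)))) by ring.
  apply Rmult_le_compat_l; [lra|]. apply Rmult_le_compat_r; [apply Rmult_le_pos; auto| exact H].
Qed.

Lemma conv k lam a b : 0 <= lam <= 1 -> 0 <= a -> 0 <= b ->
  (lam * a + (1 - lam) * b) ^ k <= lam * a ^ k + (1 - lam) * b ^ k.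
Proof. intros Hl Ha Hb. induction k.
- simpl; lra.
- simpl. assert (0 <= lam * a + (1-lam) * b) by nra.
  apply Rle_trans with ((lam * a + (1 - lam) * b) * (lam * a ^ k + (1 - lam) * b ^ k)).
  { apply Rmult_le_compat_l; auto. }
  assert (0 <= (a ^ k - b ^ k) * (a - b)).
  { destruct (Rle_dec a b). assert (a^k <= b^k) by (apply pow_incr; lra). nra.
    assert (b^k <= a^k) by (apply pow_incr; lra). nra. }
  assert (0 <= lam * (1-lam)) by nra. nra.
Qed.

Lemma pow_zero_inv x k : (1 <= k)%nat -> x ^ k = 0 -> x = 0.
Proof. intros _ H. destruct (Req_dec x 0); auto. exfalso; exact (pow_nonzero x k H0 H). Qed.

Lemma mink_zero {A} (l : list A) N (X Y : A -> R) v k : (1 <= k)%nat ->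
  (forall x, In x l -> 0 <= X x) ->
  sumR l (fun x => X x ^ k) <= N * 0^k -> sumR l (fun x => Y x ^ k) <= N * v^k ->
  sumR l (fun x => (X x + Y x)^k) <= N * (0+v)^k.
Proof. intros Hk HX H1 H2. rewrite pow_i in H1 by lia. rewrite Rmult_0_r in H1.
  assert (Z := sumR_zero_in l (fun x => X x ^ k) ltac:(intros; apply pow_le; auto) H1).
  rewrite Rplus_0_l. rewrite <- H2. right. apply sumR_ext_in. intros x Hx.
  rewrite (pow_zero_inv (X x) k Hk (Z x Hx)). f_equal; ring. Qed.

Lemma mink {A} (l : list A) N (X Y : A -> R) u v k : (1 <= k)%nat -> 0 <= N -> 0 <= u -> 0 <= v ->
  (forall x, In x l -> 0 <= X x) -> (forall x, In x l -> 0 <= Y x) ->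
  sumR l (fun x => X x ^ k) <= N * u^k -> sumR l (fun x => Y x ^ k) <= N * v^k ->
  sumR l (fun x => (X x + Y x)^k) <= N * (u+v)^k.
Proof. intros Hk HN Hu Hv HX HY H1 H2.
  destruct (Req_dec u 0) as [->|Hu0]. { apply mink_zero; auto. }
  destruct (Req_dec v 0) as [->|Hv0].
  { rewrite Rplus_comm. replace (sumR l (fun x => (X x + Y x) ^ k)) with (sumR l (fun x => (Y x + X x) ^ k)).
    apply mink_zero; auto. apply sumR_ext_in; intros; f_equal; ring. }
  assert (Hu' : 0 < u) by lra. assert (Hv' : 0 < v) by lra.
  set (lam := u / (u+v)).
  assert (Hlam : 0 <= lam <= 1).
  { unfold lam; split. apply Rmult_le_pos; [lra| apply Rlt_le, Rinv_0_lt_compat; lra].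
    apply (Rmult_le_reg_r (u+v)); [lra|]. unfold Rdiv. rewrite Rmult_assoc, Rinv_l by lra. lra. }
  set (c1 := (u+v)^k * lam * (/u)^k). set (c2 := (u+v)^k * (1-lam) * (/v)^k).
  apply Rle_trans with (sumR l (fun x => c1 * X x ^ k + c2 * Y x ^ k)).
  { apply sumR_le_in. intros x Hx.
    assert (HX' := HX x Hx). assert (HY' := HY x Hx).
    replace (X x + Y x) with ((u+v) * (lam * (X x * /u) + (1-lam) * (Y x * /v))).
    2:{ unfold lam. field. lra. }
    rewrite Rpow_mult_distr. unfold c1, c2.
    apply Rle_trans with ((u+v)^k * (lam * (X x * /u)^k + (1-lam) * (Y x * /v)^k)).
    { apply Rmult_le_compat_l; [apply pow_le; lra|]. apply conv; auto.
      apply Rmult_le_pos; [lra| apply Rlt_le, Rinv_0_lt_compat; lra].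
      apply Rmult_le_pos; [lra| apply Rlt_le, Rinv_0_lt_compat; lra]. }
    rewrite !Rpow_mult_distr. right; ring. }
  rewrite sumR_plus, !sumR_scal.
  assert (Hc1 : 0 <= c1). { unfold c1. apply Rmult_le_pos; [apply Rmult_le_pos; [apply pow_le; lra|lra]|].
    apply pow_le, Rlt_le, Rinv_0_lt_compat; lra. }
  assert (Hc2 : 0 <= c2). { unfold c2. apply Rmult_le_pos; [apply Rmult_le_pos; [apply pow_le; lra|lra]|].
    apply pow_le, Rlt_le, Rinv_0_lt_compat; lra. }
  apply Rle_trans with (c1 * (N * u^k) + c2 * (N * v^k)).
  { apply Rplus_le_compat; apply Rmult_le_compat_l; auto. }
  assert (E1 : (/u)^k * u^k = 1) by (rewrite <- Rpow_mult_distr, Rinv_l, pow1; lra).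
  assert (E2 : (/v)^k * v^k = 1) by (rewrite <- Rpow_mult_distr, Rinv_l, pow1; lra).
  unfold c1, c2.
  transitivity (N * (u+v)^k * (lam * ((/u)^k * u^k) + (1-lam) * ((/v)^k * v^k))). right; ring.
  rewrite E1, E2. right; ring.
Qed.

Definition G n r (c : list bool -> R) := sumR (cube n) (fun L => c L ^ 2 * r ^ card L).

Lemma card_true L : card (true :: L) = S (card L). Proof. reflexivity. Qed.
Lemma card_false L : card (false :: L) = card L. Proof. reflexivity. Qed.

Lemma G_nonneg n r c : 0 <= r -> 0 <= G n r c.
Proof. intros Hr; apply sumR_nonneg; intros. apply Rmult_le_pos; [apply pow2_ge_0| apply pow_le; auto]. Qed.

Lemma G_S n r c : G (S n) r c = r * G n r (fun T => c (true :: T)) + G n r (fun T => c (false :: T)).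
Proof. unfold G. rewrite sumR_cube_S, <- sumR_scal. f_equal. apply sumR_ext_in; intros.
  rewrite card_true; simpl; ring. Qed.

Lemma hyper n k c : (1 <= k)%nat ->
  sumR (cube n) (fun x => F n c x ^ (2*k)) <= 2^n * (G n (2 * INR k - 1) c) ^ k.
Proof. intros Hk. assert (Hr : 1 <= 2 * INR k - 1) by (apply le_INR in Hk; simpl in Hk; lra).
  set (r := 2 * INR k - 1) in *. revert c; induction n; intros c.
- unfold G. change (cube 0) with [[]: list bool]. rewrite !sumR_cons, !sumR_nil. rewrite F_0, pow_mult.
  change (card []) with 0%nat. right. rewrite pow_O, !Rmult_1_r, !Rplus_0_r, Rmult_1_l. reflexivity.
- set (c1 := fun T => c (true :: T)). set (c0 := fun T => c (false :: T)).
  rewrite sumR_cube_S, <- sumR_plus.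
  apply Rle_trans with (sumR (cube n) (fun x => 2 * ((F n c0 x)^2 + r * (F n c1 x)^2) ^ k)).
  { apply sumR_le_in; intros x _. rewrite !F_cons. simpl pm. fold c0 c1.
    replace (1 * F n c1 x + F n c0 x) with (F n c0 x + F n c1 x) by ring.
    replace (-1 * F n c1 x + F n c0 x) with (F n c0 x - F n c1 x) by ring.
    apply two_point. }
  rewrite sumR_scal, G_S. fold c0 c1. rewrite (Rplus_comm (r * _)).
  replace (2 ^ S n * (G n r c0 + r * G n r c1) ^ k) with (2 * (2^n * (G n r c0 + r * G n r c1) ^ k))
    by (simpl; ring).
  apply Rmult_le_compat_l; [lra|].
  apply mink; auto.
  + apply pow_le; lra.
  + apply G_nonneg; lra.
  + apply Rmult_le_pos; [lra| apply G_nonneg; lra].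
  + intros; apply pow2_ge_0.
  + intros; apply Rmult_le_pos; [lra| apply pow2_ge_0].
  + rewrite <- (IHn c0). right; apply sumR_ext_in; intros; rewrite pow_mult; reflexivity.
  + apply Rle_trans with (r^k * (2^n * G n r c1 ^ k)).
    * apply Rle_trans with (r^k * sumR (cube n) (fun x => F n c1 x ^ (2*k))).
      { rewrite <- sumR_scal. right. apply sumR_ext_in. intros. rewrite Rpow_mult_distr, pow_mult. reflexivity. }
      apply Rmult_le_compat_l; [apply pow_le; lra| apply IHn].
    * right. rewrite Rpow_mult_distr. ring.
Qed.

Lemma sumR_filter {A} (p : A -> bool) l g :
  sumR (filter p l) g = sumR l (fun x => if p x then g x else 0).
Proof. induction l; [reflexivity|]. simpl filter. destruct (p a) eqn:E; rewrite ?sumR_cons, IHl, ?E; ring. Qed.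

Lemma chi_card0 L x : card L = 0%nat -> chi L x = 1.
Proof. revert x; induction L as [|a L IH]; intros x H; [destruct x; reflexivity|].
  destruct a; [discriminate|]. destruct x; [reflexivity|]. simpl. rewrite IH; auto; ring. Qed.

Lemma sumR_cube_const n K : sumR (cube n) (fun _ => K) = 2^n * K.
Proof. induction n. unfold sumR; simpl; ring. rewrite sumR_cube_S, IHn. simpl; ring. Qed.

Definition zeros n := repeat false n.
Lemma zeros_in n : In (zeros n) (cube n).
Proof. induction n; simpl; auto. apply in_or_app; right. apply (in_map (cons false) _ (zeros n)); auto. Qed.
Lemma zeros_card n : card (zeros n) = 0%nat.
Proof. induction n; auto. Qed.

Lemma sum_F_mean0 n c : c (zeros n) = 0 -> sumR (cube n) (F n c) = 0.
Proof. intros H. rewrite <- (Rmult_0_r (2^n)), <- H, <- orth by apply zeros_in.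
  apply sumR_ext_in; intros. rewrite chi_card0 by apply zeros_card. ring. Qed.

Section S.
Variables (n d : nat) (c : list bool -> R).
Definition c1 L := if Nat.leb (card L) d then c L else 0.
Definition c2 L := if Nat.eqb (card L) 0 then 0 else c1 L.
Definition K := sumR (cube n) (fun L => if Nat.eqb (card L) 0 then c1 L else 0).

Lemma F_split x : F n c1 x = F n c2 x + K.
Proof. unfold F, K. rewrite <- sumR_plus. apply sumR_ext_in; intros L _. unfold c2.
  destruct (Nat.eqb (card L) 0) eqn:E. apply Nat.eqb_eq in E. rewrite chi_card0 by auto. ring. ring. Qed.
End S.

Lemma sumR_seq_ind k v s m : sumR (seq s m) (fun j => if Nat.eqb k j then v else 0) =
  if andb (Nat.leb s k) (Nat.ltb k (s+m)) then v else 0.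
Proof. revert s; induction m; intros s.
- simpl. rewrite sumR_nil. destruct (Nat.leb s k) eqn:E1; destruct (Nat.ltb k (s+0)) eqn:E2; simpl; auto.
  apply Nat.leb_le in E1; apply Nat.ltb_lt in E2; lia.
- simpl seq. rewrite sumR_cons, IHm.
  destruct (Nat.eqb k s) eqn:E. apply Nat.eqb_eq in E; subst.
  replace (Nat.leb (S s) s) with false by (symmetry; apply Nat.leb_gt; lia).
  replace (Nat.leb s s) with true by (symmetry; apply Nat.leb_le; lia).
  replace (Nat.ltb s (s + S m)) with true by (symmetry; apply Nat.ltb_lt; lia). simpl; ring.
  apply Nat.eqb_neq in E.
  replace (Nat.leb (S s) k) with (Nat.leb s k) by (destruct (Nat.leb s k) eqn:E1; destruct (Nat.leb (S s) k) eqn:E2; auto;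
    [apply Nat.leb_le in E1; apply Nat.leb_gt in E2| apply Nat.leb_gt in E1; apply Nat.leb_le in E2]; lia).
  replace (S s + m)%nat with (s + S m)%nat by lia. ring.
Qed.

Lemma sumR_zero_fun {A} (l : list A) : sumR l (fun _ => 0) = 0.
Proof. induction l; [reflexivity|]. rewrite sumR_cons, IHl; ring. Qed.

Lemma group d (l : list (list bool)) h :
  (forall L, In L l -> (card L = 0%nat \/ (d < card L)%nat) -> h L = 0) ->
  sumR l h = sumR (seq 1 d) (fun j => sumR (filter (fun L => Nat.eqb (card L) j) l) h).
Proof. induction l as [|a l IH]; intros H.
- rewrite sumR_nil. symmetry; apply sumR_zero_fun.
- rewrite sumR_cons, IH by (intros; apply H; simpl; auto).
  transitivity (sumR (seq 1 d) (fun j => (if Nat.eqb (card a) j then h a else 0) +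
     sumR (filter (fun L => Nat.eqb (card L) j) l) h)).
  2:{ apply sumR_ext_in; intros j _. simpl filter. destruct (Nat.eqb (card a) j); rewrite ?sumR_cons; ring. }
  rewrite sumR_plus, sumR_seq_ind. f_equal.
  destruct (Nat.leb 1 (card a) && Nat.ltb (card a) (1 + d))%bool eqn:E; auto.
  rewrite (H a); simpl; auto.
  apply Bool.andb_false_iff in E. destruct E as [E|E]; [apply Nat.leb_gt in E| apply Nat.ltb_ge in E]; lia.
Qed.

Section M.
Variables (n d : nat) (f : list bool -> R) (c : list bool -> R).
Hypothesis hc : forall x, In x (cube n) ->
  f x = sumR (filter (fun S => Nat.leb (card S) d) (cube n)) (fun S => c S * chi S x).

Lemma f_F x : In x (cube n) -> f x = F n (c1 d c) x.
Proof. intros Hx. rewrite hc, sumR_filter by auto. unfold F, c1. apply sumR_ext_in; intros.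
  destruct (Nat.leb _ _); ring. Qed.

Lemma expect_K : Expect n f = K n d c.
Proof. unfold Expect. rewrite (sumR_ext_in _ _ _ f_F).
  rewrite (sumR_ext_in _ _ (fun x => F n (c2 d c) x + K n d c)) by (intros; apply F_split).
  rewrite sumR_plus, sum_F_mean0, sumR_cube_const. field. apply pow_nonzero; lra.
  unfold c2. rewrite zeros_card. reflexivity. Qed.

Lemma g_F x : In x (cube n) -> f x - Expect n f = F n (c2 d c) x.
Proof. intros Hx. rewrite expect_K, f_F, F_split by auto. ring. Qed.

Lemma fhat_c L : In L (cube n) -> fhat n f L = c1 d c L.
Proof. intros HL. unfold fhat, Expect.
  rewrite (sumR_ext_in _ _ (fun x => chi L x * F n (c1 d c) x)) by (intros; rewrite f_F; auto).
  rewrite orth by auto. field. apply pow_nonzero; lra. Qed.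

Lemma W_c j : W n f j = sumR (filter (fun L => Nat.eqb (card L) j) (cube n)) (fun L => c1 d c L ^ 2).
Proof. unfold W. apply sumR_ext_in. intros L HL. apply filter_In in HL. rewrite fhat_c; tauto. Qed.

Lemma W_nonneg j : 0 <= W n f j.
Proof. unfold W. apply sumR_nonneg; intros; apply pow2_ge_0. Qed.

Lemma G_W r : G n r (c2 d c) = sumR (seq 1 d) (fun j => r ^ j * W n f j).
Proof. unfold G. rewrite (group d).
  - apply sumR_ext_in. intros j Hj. apply in_seq in Hj. rewrite W_c, <- sumR_scal.
    apply sumR_ext_in. intros L HL. apply filter_In in HL. destruct HL as [_ HL].
    apply Nat.eqb_eq in HL. unfold c2. rewrite HL.
    replace (Nat.eqb j 0) with false by (symmetry; apply Nat.eqb_neq; lia). ring.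
  - intros L _ [H|H]; unfold c2, c1.
    + rewrite H; simpl; ring.
    + replace (Nat.leb (card L) d) with false by (symmetry; apply Nat.leb_gt; lia).
      destruct (Nat.eqb _ _); ring.
Qed.

Lemma markov k t : (1 <= k)%nat -> 0 < t ->
  Prob n (dev_event n f t) (dev_event_dec n f t) <= G n (2 * INR k - 1) (c2 d c) ^ k / t ^ (2*k).
Proof. intros Hk Ht. unfold Prob.
  assert (Htk : 0 < t ^ (2*k)) by (apply pow_lt; auto).
  assert (H2 : 0 < 2 ^ n) by (apply pow_lt; lra).
  apply Rle_trans with (sumR (cube n) (fun x => F n (c2 d c) x ^ (2*k) / t ^ (2*k)) / 2^n).
  { unfold Rdiv. apply Rmult_le_compat_r; [apply Rlt_le, Rinv_0_lt_compat; auto|].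
    apply sumR_le_in. intros x Hx.
    assert (0 <= F n (c2 d c) x ^ (2 * k)) by (rewrite pow_mult; apply pow_le, pow2_ge_0).
    destruct (dev_event_dec n f t x) as [Hd|Hd].
    - unfold dev_event in Hd. rewrite g_F in Hd by auto.
      assert (t ^ (2*k) <= F n (c2 d c) x ^ (2*k)).
      { rewrite !pow_mult, <- (pow2_abs (F n (c2 d c) x)), <- !pow_mult. apply pow_incr; lra. }
      apply (Rmult_le_reg_r (t ^ (2*k))); auto. rewrite Rmult_assoc, Rinv_l by lra. lra.
    - apply Rmult_le_pos; auto. apply Rlt_le, Rinv_0_lt_compat; auto. }
  unfold Rdiv.
  replace (sumR (cube n) (fun x => F n (c2 d c) x ^ (2 * k) * / t ^ (2 * k))) with
    (/ t ^ (2*k) * sumR (cube n) (fun x => F n (c2 d c) x ^ (2*k)))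
    by (rewrite <- sumR_scal; apply sumR_ext_in; intros; ring).
  apply Rle_trans with (/ t ^ (2*k) * (2^n * G n (2 * INR k - 1) (c2 d c) ^ k) * / 2^n).
  - apply Rmult_le_compat_r; [apply Rlt_le, Rinv_0_lt_compat; auto|].
    apply Rmult_le_compat_l; [apply Rlt_le, Rinv_0_lt_compat; auto|]. apply hyper; auto.
  - right; field; lra.
Qed.

Lemma prob_le1 t : Prob n (dev_event n f t) (dev_event_dec n f t) <= 1.
Proof. unfold Prob. assert (H2 : 0 < 2 ^ n) by (apply pow_lt; lra).
  apply (Rmult_le_reg_r (2^n)); auto. unfold Rdiv. rewrite Rmult_assoc, Rinv_l, Rmult_1_r, Rmult_1_l by lra.
  rewrite <- (Rmult_1_r (2^n)), <- sumR_cube_const. apply sumR_le_in. intros.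
  destruct (dev_event_dec n f t x); lra. Qed.
End M.

Lemma exists_k m : 1 < m -> exists k, (1 <= k)%nat /\ 2 * INR k - 1 <= m /\ m - 1 <= 2 * INR k.
Proof. intros Hm. destruct (archimed ((m+1)/2)) as [H1 H2].
  set (z := up ((m+1)/2)) in *.
  assert (Hz : (2 <= z)%Z). { apply le_IZR. assert (IZR 1 < IZR z) by (simpl; lra).
    apply lt_IZR in H. apply IZR_le. lia. }
  exists (Z.to_nat (z - 1)).
  rewrite INR_IZR_INZ, Z2Nat.id by lia. rewrite minus_IZR. simpl (IZR 1).
  split; [lia| split; lra].
Qed.

Lemma omin_none l : fold_right omin None l = None -> forall o, In o l -> o = None.
Proof. induction l as [|a l IH]; intros H o Ho; [destruct Ho|]. simpl in H.
  destruct a; destruct (fold_right omin None l) eqn:E; simpl in H; try discriminate.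
  destruct Ho as [<-|Ho]; auto. Qed.

Lemma omin_some l : forall m, fold_right omin None l = Some m -> forall y, In (Some y) l -> m <= y.
Proof. induction l as [|a l IH]; intros m H y Hy; [destruct Hy|]. simpl in H.
  destruct Hy as [Hy|Hy].
  - subst a. destruct (fold_right omin None l) eqn:E; simpl in H; injection H; intros <-.
    apply Rmin_l. lra.
  - destruct a as [x|]; destruct (fold_right omin None l) eqn:E; simpl in H; try discriminate.
    + injection H; intros <-. apply Rle_trans with r; [apply Rmin_r| apply (IH r); auto].
    + discriminate (omin_none l E _ Hy).
    + apply (IH m); auto.
Qed.

Lemma sumR_constant {A} (l : list A) B : sumR l (fun _ => B) = INR (length l) * B.
Proof. induction l; [rewrite sumR_nil; simpl; ring|]. rewrite sumR_cons, IHl. simpl length. rewrite S_INR; ring. Qed.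

Lemma exp_mono a b : a <= b -> exp a <= exp b.
Proof. intros H. destruct (Rle_lt_or_eq_dec _ _ H). apply Rlt_le, exp_increasing; auto. subst; lra. Qed.

Theorem proposition2p3 (n d : nat) (f : list bool -> R) (t : R)
  (hdn : (d <= n)%nat)
  (hf : exists c : list bool -> R, forall x, In x (cube n) ->
          f x = sumR (filter (fun S => Nat.leb (card S) d) (cube n))
                     (fun S => c S * chi S x))
  (ht : 0 < t) :
  Prob n (dev_event n f t) (dev_event_dec n f t) <= tail_bound (minterm n d f t).
Proof.
  destruct hf as [c hc].
  destruct (minterm n d f t) as [m|] eqn:Em; simpl tail_bound.
  - destruct (Rle_dec m 1) as [Hm1|Hm1].
    { apply Rle_trans with 1. apply prob_le1. assert (H := exp_ineq1_le (1-m)). lra. }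
    assert (Hm : 1 < m) by lra.
    destruct (exists_k m Hm) as [k [Hk [Hk1 Hk2]]].
    assert (Hd : (1 <= d)%nat). { destruct d; [discriminate|lia]. }
    set (r := 2 * INR k - 1) in *.
    assert (Hr : 1 <= r) by (unfold r; apply le_INR in Hk; simpl in Hk; lra).
    set (B := (t / (INR d * exp 1)) ^ 2).
    assert (Hdpos : 1 <= INR d) by (apply le_INR in Hd; simpl in Hd; lra).
    assert (He : 0 < exp 1) by apply exp_pos.
    assert (HG : G n r (c2 d c) <= t^2 / exp 1 ^ 2).
    { rewrite (G_W n d f c hc). apply Rle_trans with (sumR (seq 1 d) (fun _ => B)).
      - apply sumR_le_in. intros j Hj. apply in_seq in Hj.
        assert (HW := W_nonneg n f j).
        destruct (Req_EM_T (W n f j) 0) as [HW0|HW0].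
        { rewrite HW0, Rmult_0_r. apply pow2_ge_0. }
        assert (Hterm : term n d f t j = Some (Rpower (t / (INR d * exp 1 * sqrt (W n f j))) (2 / INR j))).
        { unfold term. destruct (Req_EM_T (W n f j) 0); [contradiction|reflexivity]. }
        assert (Hmle : m <= Rpower (t / (INR d * exp 1 * sqrt (W n f j))) (2 / INR j)).
        { apply (omin_some _ _ Em). rewrite <- Hterm. apply in_map, in_seq; lia. }
        assert (Hsq : 0 < sqrt (W n f j)) by (apply sqrt_lt_R0; lra).
        set (x := t / (INR d * exp 1 * sqrt (W n f j))) in *.
        assert (Hx : 0 < x). { unfold x. apply Rdiv_lt_0_compat; auto.
          apply Rmult_lt_0_compat; [apply Rmult_lt_0_compat|]; lra. }
        assert (Hj0 : 0 < INR j) by (apply lt_0_INR; lia).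
        assert (Hmj : r ^ j <= x ^ 2).
        { apply Rle_trans with (m ^ j). apply pow_incr; lra.
          rewrite <- (Rpower_pow j m) by lra. rewrite <- (Rpower_pow 2 x) by lra.
          apply Rle_trans with (Rpower (Rpower x (2 / INR j)) (INR j)).
          apply Rle_Rpower_l; lra. rewrite Rpower_mult. right. f_equal. unfold Rdiv. rewrite Rmult_assoc, Rinv_l by lra. simpl; ring. }
        apply Rle_trans with (x^2 * W n f j). apply Rmult_le_compat_r; lra.
        right. unfold x, B.
        assert (key : forall w s D, 0 < s -> 0 < D -> s^2 = w -> (t/(D*s))^2 * w = (t/D)^2).
        { intros w s D Hs HD <-. field. lra. }
        apply key; auto. apply Rmult_lt_0_compat; lra. apply pow2_sqrt; lra.
      - rewrite sumR_constant, length_seq. unfold B.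
        replace (INR d * (t / (INR d * exp 1)) ^ 2) with ((t ^ 2 / exp 1 ^ 2) * / INR d) by (field; lra).
        assert (/ INR d <= 1). { rewrite <- Rinv_1. apply Rinv_le_contravar; lra. }
        assert (0 <= t ^ 2 / exp 1 ^ 2). { unfold Rdiv. apply Rmult_le_pos. apply pow2_ge_0.
          apply Rlt_le, Rinv_0_lt_compat, pow_lt; lra. }
        rewrite <- (Rmult_1_r (t ^ 2 / exp 1 ^ 2)) at 2. apply Rmult_le_compat_l; lra. }
    apply Rle_trans with (G n r (c2 d c) ^ k / t ^ (2 * k)).
    { apply markov; auto. }
    assert (HG0 : 0 <= G n r (c2 d c)) by (apply G_nonneg; lra).
    assert (Htk : 0 < t ^ (2*k)) by (apply pow_lt; lra).
    apply Rle_trans with ((t ^ 2 / exp 1 ^ 2) ^ k / t ^ (2 * k)).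
    { unfold Rdiv. apply Rmult_le_compat_r; [apply Rlt_le, Rinv_0_lt_compat; lra|]. apply pow_incr; lra. }
    assert (E1 : (t ^ 2 / exp 1 ^ 2) ^ k * exp 1 ^ (2*k) = t ^ (2*k)).
    { rewrite !pow_mult, <- Rpow_mult_distr. f_equal. field. lra. }
    assert (E2 : exp 1 ^ (2*k) = exp (2 * INR k)).
    { rewrite <- Rpower_pow by lra. unfold Rpower. rewrite ln_exp, mult_INR. simpl. f_equal; ring. }
    assert (Hek : 0 < exp 1 ^ (2*k)) by (apply pow_lt; lra).
    apply Rle_trans with (/ exp 1 ^ (2*k)).
    { right. rewrite <- E1. field. split; [lra|]. apply pow_nonzero. unfold Rdiv. apply Rmult_integral_contrapositive; split; [apply pow_nonzero; lra| apply Rinv_neq_0_compat, pow_nonzero; lra]. }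
    rewrite E2, <- exp_Ropp. apply exp_mono. lra.
  - apply Rle_trans with (G n (2 * INR 1 - 1) (c2 d c) ^ 1 / t ^ (2*1)).
    { apply markov; auto. }
    rewrite (G_W n d f c hc). rewrite (sumR_ext_in _ _ (fun _ => 0)). rewrite sumR_zero_fun.
    right; unfold Rdiv; simpl; ring.
    intros j Hj. assert (Hn := omin_none _ Em (term n d f t j) ltac:(apply in_map; auto)).
    unfold term in Hn. destruct (Req_EM_T (W n f j) 0) as [H0|H0]. rewrite H0; ring. discriminate.
Qed.
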